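(* Let $k\ge 3$ be an integer and let $0<r\le \log k/k$ (natural logarithm). Define, for $\mu\in[0,1]$, \[ G(\mu)=k^{1-k}(k-1-\mu)^{k-2}\bigl(k(1-\mu+\mu^2)-1\bigr), \] \[ t(\mu)=\Bigl(\tfrac{1-\mu}{k}\Bigr)^{\frac{1-\mu}{k}}\Bigl(\tfrac{\mu}{k}\Bigr)^{\frac{2\mu}{k}}\Bigl(1-\tfrac{1}{k}-\tfrac{\mu}{k}\Bigr)^{1-\frac1k-\frac{\mu}{k}} \] (with the convention $0^0=1$), and $\Gamma_r(\mu)=G(\mu)^r/t(\mu)$. Let $g(\delta)=k\delta(1-\delta)^{k-1}$ and \[ \gamma_r=\frac{g(1/k)^r}{(1/k)^{1/k}(1-1/k)^{1-1/k}} . \] Then for every $\mu\in[0,1]$, $\Gamma_r(\mu)\le \gamma_r^2$. *)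

(* Defs.v *)
From Stdlib Require Import Reals Lra.
Open Scope R_scope.

(* Real power a^b for a >= 0, with the conventions 0^0 = 1 and 0^b = 0 for b <> 0. *)
Definition rpow (a b : R) : R :=
  if Req_EM_T a 0 then (if Req_EM_T b 0 then 1 else 0) else Rpower a b.

Definition Gfun (k : nat) (mu : R) : R :=
  Rpower (INR k) (1 - INR k) * (INR k - 1 - mu) ^ (k - 2)
  * (INR k * (1 - mu + mu ^ 2) - 1).

Definition tfun (k : nat) (mu : R) : R :=
  let K := INR k in
  rpow ((1 - mu) / K) ((1 - mu) / K)
  * rpow (mu / K) (2 * mu / K)
  * rpow (1 - 1 / K - mu / K) (1 - 1 / K - mu / K).

Definition Gamma_r (k : nat) (r mu : R) : R := rpow (Gfun k mu) r / tfun k mu.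

Definition gfun (k : nat) (d : R) : R := INR k * d * (1 - d) ^ (k - 1).

Definition gamma_r (k : nat) (r : R) : R :=
  let K := INR k in
  rpow (gfun k (1 / K)) r / (rpow (1 / K) (1 / K) * rpow (1 - 1 / K) (1 - 1 / K)).

(* Main.v *)
Require Import Defs.
From Stdlib Require Import Reals Lra Lia.
From Coquelicot Require Import Coquelicot.
Open Scope R_scope.

Lemma ln_le_xm1 x : 0 < x -> ln x <= x - 1.
Proof. intros Hx. pose proof (exp_ineq1_le (ln x)). rewrite exp_ln in H; lra. Qed.

Lemma mono_up (f f' : R -> R) a b : a <= b ->
  (forall c, a <= c <= b -> is_derive f c (f' c)) ->
  (forall c, a < c < b -> 0 <= f' c) -> f a <= f b.
Proof.
  intros Hab Hd Hp. destruct (Req_dec a b) as [->|Hne]; [lra|].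
  destruct (MVT_cor2 f f' a b) as [c [Hc1 Hc2]]; [lra| |].
  { intros c Hc. apply is_derive_Reals. now apply Hd. }
  specialize (Hp c Hc2). nra.
Qed.

Lemma L2 x : 0 <= x <= 1 -> (x - 1) + (x - 1)^2/2 <= x * ln x.
Proof.
  intros Hx. destruct (Req_dec x 0) as [->|Hne]; [rewrite Rmult_0_l; lra|].
  set (h := fun x => - (x * ln x - (x - 1) - (x-1)^2/2)).
  assert (h x <= h 1).
  { apply (mono_up h (fun x => - (ln x - (x - 1)))); [lra| |].
    - intros c Hc. unfold h. auto_derive; [lra|]. field. lra.
    - intros c Hc. pose proof (ln_le_xm1 c). lra. }
  unfold h in H. rewrite ln_1 in H. lra.
Qed.

Lemma P3 t : 0 <= t -> 0 <= ln (1 + t) - t + t^2/2.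
Proof.
  intros Ht. set (p := fun t => ln (1 + t) - t + t^2/2).
  assert (p 0 <= p t).
  { apply (mono_up p (fun t => t^2/(1+t))); [lra| |].
    - intros c Hc. unfold p. auto_derive; [lra|]. field. lra.
    - intros c Hc. apply Rmult_le_pos; [nra|]. apply Rlt_le, Rinv_0_lt_compat; lra. }
  unfold p in H. replace (1+0) with 1 in H by ring. rewrite ln_1 in H. lra.
Qed.

Lemma L3 t : 0 <= t -> t + t^2/2 - t^3/6 <= (1 + t) * ln (1 + t).
Proof.
  intros Ht. set (p := fun t => (1 + t) * ln (1 + t) - t - t^2/2 + t^3/6).
  assert (p 0 <= p t).
  { apply (mono_up p (fun t => ln (1 + t) - t + t^2/2)); [lra| |].
    - intros c Hc. unfold p. auto_derive; [lra|]. field. lra.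
    - intros c Hc. apply P3. lra. }
  unfold p in H. replace (1+0) with 1 in H by ring. rewrite ln_1 in H. lra.
Qed.

Lemma P4 z : 0 <= z -> 2 * z / (z + 2) <= ln (1 + z).
Proof.
  intros Hz. set (p := fun z => ln (1 + z) - 2 * z / (z + 2)).
  assert (p 0 <= p z).
  { apply (mono_up p (fun z => z^2/((1+z)*(z+2)^2))); [lra| |].
    - intros c Hc. unfold p. auto_derive; [lra|]. field. lra.
    - intros c Hc. apply Rmult_le_pos; [nra|]. apply Rlt_le, Rinv_0_lt_compat.
      apply Rmult_lt_0_compat; nra. }
  unfold p in H. replace (1+0) with 1 in H by ring. rewrite ln_1 in H.
  replace (2*0/(0+2)) with 0 in H by field. lra.
Qed.

Lemma L4 z M : 0 < z -> z <= M ->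
  ((1 + M) * ln (1 + M) - M) * z^2 <= ((1 + z) * ln (1 + z) - z) * M^2.
Proof.
  intros Hz HzM. set (q := fun z => - (((1 + z) * ln (1 + z) - z) / z^2)).
  assert (q z <= q M).
  { apply (mono_up q (fun z => ((z+2) * ln (1+z) - 2 * z) / z^3)); [lra| |].
    - intros c Hc. unfold q. auto_derive; [split; [lra|]; split; [nra|auto]|].
      field. lra.
    - intros c Hc. pose proof (P4 c).
      apply Rmult_le_pos; [|apply Rlt_le, Rinv_0_lt_compat; apply pow_lt; lra].
      assert (2 * c <= (c+2) * ln (1+c)).
      { replace (2*c) with ((c+2) * (2*c/(c+2))) by (field; lra).
        apply Rmult_le_compat_l; [lra|]. apply H; lra. }
      lra. }
  unfold q in H.
  assert (0 < z^2) by (apply pow_lt; lra). assert (0 < M^2) by (apply pow_lt; lra).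
  apply Ropp_le_cancel in H.
  unfold Rdiv in H.
  apply (Rmult_le_compat_r (z^2 * M^2)) in H; [|nra].
  replace (((1 + M) * ln (1 + M) - M) * / M ^ 2 * (z ^ 2 * M ^ 2)) with
    (((1 + M) * ln (1 + M) - M) * z^2) in H by (field; lra).
  replace (((1 + z) * ln (1 + z) - z) * / z ^ 2 * (z ^ 2 * M ^ 2)) with
    (((1 + z) * ln (1 + z) - z) * M^2) in H by (field; lra).
  exact H.
Qed.


Lemma xlnx_ge x : 0 < x -> x - 1 <= x * ln x.
Proof.
  intros Hx. pose proof (ln_le_xm1 (/x) (Rinv_0_lt_compat _ Hx)).
  rewrite ln_Rinv in H by lra.
  assert (x * (- ln x) <= x * (/x - 1)) by (apply Rmult_le_compat_l; lra).
  replace (x * (/x - 1)) with (1 - x) in H0 by (field; lra). lra.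
Qed.

Lemma ln3 : ln 3 <= 1.35.
Proof.
  assert (3 <= exp 1.35).
  { replace 1.35 with (0.45 + 0.45 + 0.45) by lra. rewrite !exp_plus.
    pose proof (exp_ineq1_le 0.45). assert (0 <= 1 + 0.45) by lra. 
    assert (1.45 * 1.45 <= exp 0.45 * exp 0.45) by nra.
    assert (1.45 * 1.45 * 1.45 <= exp 0.45 * exp 0.45 * exp 0.45) by nra. lra. }
  rewrite <- (ln_exp 1.35). destruct (Req_dec 3 (exp 1.35)) as [<-|]; [lra|].
  apply Rlt_le, ln_increasing; lra.
Qed.

Lemma L5 x : 3 <= x -> x * ln x <= x^2/2 - 1/3.
Proof.
  intros Hx. assert (ln x <= 1.35 + x/3 - 1).
  { replace x with (3 * (x/3)) at 1 by field. rewrite ln_mult by lra.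
    pose proof ln3. pose proof (ln_le_xm1 (x/3)). lra. }
  assert (x * ln x <= x * (1.35 + x/3 - 1)) by (apply Rmult_le_compat_l; lra).
  nra.
Qed.

Lemma KLmain m y : 2 <= m -> -1/m <= y <= 1 ->
  (m+1) * ln (m+1) * y^2 <=
  (1+m*y) * ln (1+m*y) + 2*m*((1-y) * ln (1-y)) + m^2 * ((1 + y/m) * ln (1 + y/m)).
Proof.
  intros Hm Hy.
  assert (Hmy : -1 <= m * y).
  { destruct Hy as [Hy _]. apply (Rmult_le_compat_l m) in Hy; [|lra].
    replace (m * (-1/m)) with (-1) in Hy by (field; lra). lra. }
  destruct (Rle_lt_dec 0 y) as [Hy0|Hy0].
  - pose proof (L2 (1-y) ltac:(lra)).
    assert (HZ : 0 < 1 + y/m) by (assert (0 <= y/m) by (apply Rdiv_le_0_compat; lra); lra).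
    pose proof (xlnx_ge _ HZ).
    destruct (Req_dec y 0) as [->|Hyn].
    { replace (1 + m*0) with 1 by ring. replace (1-0) with 1 by ring.
      replace (1 + 0/m) with 1 by (field; lra). rewrite ln_1. lra. }
    pose proof (L4 (m*y) m ltac:(nra) ltac:(nra)).
    replace (1 + m) with (m + 1) in H1 by ring.
    assert ((1 + m * y) * ln (1 + m * y) - m * y >= ((m+1) * ln (m+1) - m) * y^2).
    { apply Rle_ge. apply (Rmult_le_reg_r (m^2)); [nra|].
      replace (((m + 1) * ln (m + 1) - m) * y ^ 2 * m^2) with
        (((m + 1) * ln (m + 1) - m) * (m*y) ^ 2) by ring. exact H1. }
    assert (m^2 * (1 + y/m - 1) <= m^2 * ((1 + y / m) * ln (1 + y / m)))
      by (apply Rmult_le_compat_l; nra).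
    replace (m^2 * (1 + y/m - 1)) with (m*y) in H3 by (field; lra).
    assert (2*m*(1 - y - 1 + (1 - y - 1) ^ 2 / 2) <= 2*m*((1 - y) * ln (1 - y)))
      by (apply Rmult_le_compat_l; lra).
    nra.
  - set (t := -y).
    assert (Ht : 0 < t <= 1/m) by (unfold t; split; [lra|]; 
      replace (1/m) with (- (-1/m)) by (field; lra); lra).
    assert (Hmt : m * t <= 1).
    { destruct Ht as [_ Ht]. apply (Rmult_le_compat_l m) in Ht; [|lra].
      replace (m * (1/m)) with 1 in Ht by (field; lra). lra. }
    pose proof (L2 (1 + m*y) ltac:(nra)).
    pose proof (L3 t ltac:(lra)).
    replace (1 + t) with (1 - y) in H0 by (unfold t; ring).
    assert (Hz : 0 <= 1 + y/m <= 1).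
    { replace (y/m) with (- (m*t) / m^2) by (unfold t; field; lra).
      assert (0 <= m*t/m^2 <= 1/m^2).
      { split. apply Rdiv_le_0_compat; nra. unfold Rdiv. apply Rmult_le_compat_r.
        apply Rlt_le, Rinv_0_lt_compat; nra. lra. }
      assert (1/m^2 <= 1/4). { apply Rmult_le_reg_r with (4*m^2); [nra|].
        replace (1/m^2*(4*m^2)) with 4 by (field; lra). nra. }
      unfold Rdiv in *. lra. }
    pose proof (L2 _ Hz).
    assert (m^2 * (1 + y / m - 1 + (1 + y / m - 1) ^ 2 / 2) <=
            m^2 * ((1 + y / m) * ln (1 + y / m))) by (apply Rmult_le_compat_l; nra).
    replace (m^2 * (1 + y / m - 1 + (1 + y / m - 1) ^ 2 / 2)) with
      (m*y + y^2/2) in H2 by (field; lra).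
    assert (2*m*(t + t ^ 2 / 2 - t ^ 3 / 6) <= 2*m*((1 - y) * ln (1 - y)))
      by (apply Rmult_le_compat_l; lra).
    pose proof (L5 (m+1) ltac:(lra)).
    assert (m * t^3 <= t^2) by (assert (0 <= t^2) by nra; nra).
    assert (y^2 = t^2) by (unfold t; ring).
    assert (y = -t) by (unfold t; ring).
    assert ((m + 1) * ln (m + 1) * y ^ 2 <= ((m+1)^2/2 - 1/3) * y^2).
    { apply Rmult_le_compat_r; [nra|]. lra. }
    nra.
Qed.


Lemma exp_le_mono x y : x <= y -> exp x <= exp y.
Proof. intros H. destruct (Req_dec x y) as [->|]; [lra|]. apply Rlt_le, exp_increasing; lra. Qed.

Lemma rpow_xx x c y : 0 <= x -> y = c * x -> rpow x y = exp (c * (x * ln x)).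
Proof.
  intros Hx Hy. unfold rpow. destruct (Req_EM_T x 0) as [->|Hne].
  - rewrite Rmult_0_r in Hy. destruct (Req_EM_T y 0); [|contradiction].
    rewrite Rmult_0_l, Rmult_0_r, exp_0; reflexivity.
  - unfold Rpower. rewrite Hy. f_equal. ring.
Qed.

Lemma rpow_pos x y : 0 < x -> rpow x y = exp (y * ln x).
Proof. intros Hx. unfold rpow. destruct (Req_EM_T x 0); [lra|]. reflexivity. Qed.

Lemma xlnx_mul s X : 0 <= X -> 0 < s -> (s*X) * ln (s*X) = s * (X * ln X) + s*X*ln s.
Proof.
  intros HX Hs. destruct (Req_dec X 0) as [->|]; [ring|].
  rewrite ln_mult by lra. ring.
Qed.

Theorem mainTheorem4 (k : nat) (r mu : R) :
  (3 <= k)%nat -> 0 < r -> r <= ln (INR k) / INR k ->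
  0 <= mu <= 1 ->
  Gamma_r k r mu <= (gamma_r k r) ^ 2.
Proof.
  intros Hk Hr Hr0 Hmu.
  assert (HK : 3 <= INR k) by (replace 3 with (INR 3) by (simpl; ring); apply le_INR; exact Hk).
  assert (Hk2 : INR (k - 2) = INR k - 2) by (rewrite minus_INR by lia; simpl; ring).
  assert (Hk1 : INR (k - 1) = INR k - 1) by (rewrite minus_INR by lia; simpl; ring).
  set (K := INR k) in *.
  set (L := ln K).
  set (m := K - 1).
  set (V := K - 1 - mu).
  set (Q := K * (1 - mu + mu ^ 2) - 1).
  assert (HV : 0 < V) by (unfold V; lra).
  assert (HQ : 0 < Q) by (unfold Q; nra).
  assert (Hm : 0 < m) by (unfold m; lra).
  set (G := Gfun k mu).
  assert (HG : 0 < G).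
  { unfold G, Gfun. fold K. fold V Q. apply Rmult_lt_0_compat; [|lra].
    apply Rmult_lt_0_compat; [apply exp_pos|apply pow_lt; lra]. }
  assert (HlnG : ln G = (1 - K) * L + (K - 2) * ln V + ln Q).
  { unfold G, Gfun. fold K. fold V Q.
    rewrite ln_mult; [|apply Rmult_lt_0_compat; [apply exp_pos|apply pow_lt; lra]|lra].
    rewrite ln_mult; [|apply exp_pos|apply pow_lt; lra].
    rewrite ln_Rpower, ln_pow by lra. rewrite Hk2. reflexivity. }
  set (g := gfun k (1 / K)).
  assert (Hlm : ln (1 - 1/K) = ln m - L).
  { replace (1 - 1/K) with (m * / K) by (unfold m; field; lra).
    rewrite ln_mult, ln_Rinv by (try apply Rinv_0_lt_compat; lra). reflexivity. }
  assert (Hg : 0 < g).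
  { unfold g, gfun. fold K. apply Rmult_lt_0_compat.
    apply Rmult_lt_0_compat; [lra|]. apply Rdiv_lt_0_compat; lra.
    apply pow_lt. replace (1 - 1/K) with (m / K) by (unfold m; field; lra).
    apply Rdiv_lt_0_compat; lra. }
  assert (Hlng : ln g = (K - 1) * (ln m - L)).
  { unfold g, gfun. fold K. replace (K * (1/K)) with 1 by (field; lra).
    rewrite Rmult_1_l, ln_pow, Hk1, Hlm; [reflexivity|].
    replace (1 - 1/K) with (m / K) by (unfold m; field; lra). apply Rdiv_lt_0_compat; lra. }
  set (y := 1 - K * mu / m).
  assert (HA : ln G - 2 * ln g <= y ^ 2).
  { set (U := K * V / m^2). set (W := K * Q / m^2).
    assert (HU : 0 < U) by (unfold U; apply Rdiv_lt_0_compat; nra).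
    assert (HW : 0 < W) by (unfold W; apply Rdiv_lt_0_compat; nra).
    assert (HlnU : ln U = L + ln V - 2 * ln m).
    { unfold U, Rdiv. rewrite !ln_mult, ln_Rinv, ln_pow by (try apply Rinv_0_lt_compat; try apply pow_lt; nra).
      simpl INR. fold L. ring. }
    assert (HlnW : ln W = L + ln Q - 2 * ln m).
    { unfold W, Rdiv. rewrite !ln_mult, ln_Rinv, ln_pow by (try apply Rinv_0_lt_compat; try apply pow_lt; nra).
      simpl INR. fold L. ring. }
    assert (Heq : ln G - 2 * ln g = (K - 2) * ln U + ln W).
    { rewrite HlnG, Hlng, HlnU, HlnW. unfold m. ring. }
    assert ((K - 2) * ln U <= (K - 2) * (U - 1)) by (apply Rmult_le_compat_l; [lra|apply ln_le_xm1; exact HU]).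
    pose proof (ln_le_xm1 W HW).
    assert (Hid : (K - 2) * (U - 1) + (W - 1) = y ^ 2) by (unfold U, W, y, V, Q, m; field; lra).
    lra. }
  set (a := (1 - mu) / K). set (b := mu / K). set (c := 1 - 1 / K - mu / K).
  set (KL := a * ln a + 2 * (b * ln b) + c * ln c
             - 2 * (1 / K * ln (1 / K) + (1 - 1 / K) * ln (1 - 1 / K))).
  assert (HKL : L / K * y ^ 2 <= KL).
  { pose proof (KLmain m y ltac:(unfold m; lra)) as Hmain.
    assert (Hyr : -1 / m <= y <= 1).
    { unfold y. split.
      - apply Rle_trans with (1 - K * 1 / m).
        + unfold m. right. field. lra.
        + unfold Rdiv. apply Rplus_le_compat_l, Ropp_le_contravar, Rmult_le_compat_r.
          apply Rlt_le, Rinv_0_lt_compat; lra. nra.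
      - assert (0 <= K * mu / m) by (apply Rdiv_le_0_compat; nra). lra. }
    specialize (Hmain Hyr).
    replace (m + 1) with K in Hmain by (unfold m; ring). fold L in Hmain.
    set (X := 1 + m * y) in *. set (Y := 1 - y) in *. set (Z := 1 + y / m) in *.
    assert (HX : 0 <= X) by (unfold X, y; replace (1 + m * (1 - K * mu / m)) with (K * (1 - mu)) by (unfold m; field; lra); nra).
    assert (HY : 0 <= Y) by (unfold Y, y; replace (1 - (1 - K * mu / m)) with (K * mu / m) by ring; apply Rdiv_le_0_compat; nra).
    assert (HZ : 0 <= Z) by (unfold Z, y; replace (1 + (1 - K * mu / m) / m) with (K * V / m^2) by (unfold V, m; field; lra); apply Rdiv_le_0_compat; nra).
    assert (Ha : a = / K^2 * X) by (unfold a, X, y, m; field; lra).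
    assert (Hb : b = (m / K^2) * Y) by (unfold b, Y, y, m; field; lra).
    assert (Hc : c = (m^2 / K^2) * Z) by (unfold c, Z, y, m; field; lra).
    assert (HK2 : 0 < / K^2) by (apply Rinv_0_lt_compat; nra).
    assert (HmK : 0 < m / K^2) by (apply Rdiv_lt_0_compat; nra).
    assert (HmK2 : 0 < m^2 / K^2) by (apply Rdiv_lt_0_compat; nra).
    assert (E1 : ln (/ K^2) = - 2 * L) by (rewrite ln_Rinv, ln_pow by nra; simpl; fold L; ring).
    assert (E2 : ln (m / K^2) = ln m - 2 * L) by (unfold Rdiv; rewrite ln_mult, E1 by lra; ring).
    assert (E3 : ln (m^2 / K^2) = 2 * ln m - 2 * L) by (unfold Rdiv; rewrite ln_mult, E1, ln_pow by nra; simpl; ring).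
    assert (E4 : ln (1 / K) = - L) by (unfold Rdiv; rewrite Rmult_1_l, ln_Rinv by lra; reflexivity).
    assert (HKLe : KL = / K^2 * (X * ln X + 2 * m * (Y * ln Y) + m^2 * (Z * ln Z))).
    { unfold KL. rewrite Ha, Hb, Hc, !xlnx_mul, E1, E2, E3, E4, Hlm by assumption.
      unfold X, Y, Z, y, m. field. lra. }
    rewrite HKLe.
    replace (L / K * y^2) with (/ K^2 * (K * L * y^2)) by (field; lra).
    apply Rmult_le_compat_l; lra. }
  unfold Gamma_r, gamma_r, tfun. fold K. fold G. fold g. fold c. fold a b.
  rewrite (rpow_pos G r HG), (rpow_pos g r Hg).
  assert (Ha0 : 0 <= a) by (unfold a; apply Rdiv_le_0_compat; lra).
  assert (Hb0 : 0 <= b) by (unfold b; apply Rdiv_le_0_compat; lra).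
  assert (Hc0 : 0 <= c) by (unfold c; replace (1 - 1/K - mu/K) with (V / K) by (unfold V; field; lra); apply Rdiv_le_0_compat; lra).
  rewrite (rpow_xx a 1 a Ha0 ltac:(ring)), (rpow_xx b 2 (2 * mu / K) Hb0 ltac:(unfold b; field; lra)),
    (rpow_xx c 1 c Hc0 ltac:(ring)).
  assert (H1K : 0 <= 1/K) by (apply Rdiv_le_0_compat; lra).
  assert (H1K' : 0 <= 1 - 1/K) by (replace (1 - 1/K) with (m/K) by (unfold m; field; lra); apply Rdiv_le_0_compat; lra).
  rewrite (rpow_xx (1/K) 1 (1/K) H1K ltac:(ring)), (rpow_xx (1 - 1/K) 1 (1 - 1/K) H1K' ltac:(ring)).
  rewrite <- !exp_plus. unfold Rdiv. rewrite <- !exp_Ropp, <- !exp_plus.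
  simpl. rewrite Rmult_1_r, <- exp_plus.
  apply exp_le_mono.
  assert (r * (ln G - 2 * ln g) <= r * y^2) by (apply Rmult_le_compat_l; lra).
  assert (r * y^2 <= L / K * y^2) by (apply Rmult_le_compat_r; [nra|exact Hr0]).
  unfold KL in HKL. unfold Rdiv in HKL. nra.
Qed.
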